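(* There exists an absolute constant $C>0$ such that the following holds. Let $\varepsilon>0$, let $t\geq1$ be an integer, and let $n\geq 2^{Ct/\varepsilon^{16}}$. Then every locally $\varepsilon$-balanced $2$-edge-coloured (red/blue) $K_n$ contains one of the following: (i) two disjoint vertex sets $A,B$ of size $t$ such that, for some colour $c$, all edges inside $A$ and inside $B$ have colour $c$ and all edges between $A$ and $B$ have the other colour; (ii) four disjoint vertex sets $V_1,V_2,V_3,V_4$ of size $t$ such that all edges inside $V_1$, inside $V_4$, between $V_1$ and $V_3$, between $V_1$ and $V_4$, and between $V_2$ and $V_4$ are red, while all edges inside $V_2$, inside $V_3$, between $V_1$ and $V_2$, between $V_2$ and $V_3$, and between $V_3$ and $V_4$ are blue.
   Context: A $2$-edge-coloured $K_n$ is called locally $\varepsilon$-balanced if every vertex is incident to at least $\varepsilon n$ red edges and at least $\varepsilon n$ blue edges. *)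

(* Defs.v *)
From mathcomp Require Import all_boot.
From Stdlib Require Import Reals.

Set Implicit Arguments.
Unset Strict Implicit.
Unset Printing Implicit Defensive.

(* A 2-edge-colouring of K_n on vertex set 'I_n: col x y = true means the edge
   xy is red, false means blue.  Only values at x <> y matter; we require
   symmetry so that it is a colouring of undirected edges. *)
Definition colouring_sym (n : nat) (col : 'I_n -> 'I_n -> bool) : Prop :=
  forall x y : 'I_n, x != y -> col x y = col y x.

Definition cdeg (n : nat) (col : 'I_n -> 'I_n -> bool) (b : bool) (v : 'I_n) : nat :=
  #|[set u : 'I_n | (u != v) && (col v u == b)]|.

Definition locally_balanced (n : nat) (col : 'I_n -> 'I_n -> bool) (eps : R) : Prop :=
  forall v : 'I_n,
    (eps * INR n <= INR (cdeg col true v))%R /\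
    (eps * INR n <= INR (cdeg col false v))%R.

Definition mono_in (n : nat) (col : 'I_n -> 'I_n -> bool) (A : {set 'I_n}) (b : bool) : Prop :=
  forall x y, x \in A -> y \in A -> x != y -> col x y = b.

Definition mono_between (n : nat) (col : 'I_n -> 'I_n -> bool) (A B : {set 'I_n}) (b : bool) : Prop :=
  forall x y, x \in A -> y \in B -> col x y = b.

Definition outcome_i (n t : nat) (col : 'I_n -> 'I_n -> bool) : Prop :=
  exists (A B : {set 'I_n}) (c : bool),
    [/\ #|A| = t, #|B| = t & [disjoint A & B] ] /\
    [/\ mono_in col A c, mono_in col B c & mono_between col A B (~~ c)].

Definition outcome_ii (n t : nat) (col : 'I_n -> 'I_n -> bool) : Prop :=
  exists V1 V2 V3 V4 : {set 'I_n},
    [/\ #|V1| = t, #|V2| = t, #|V3| = t & #|V4| = t] /\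
    [/\ ([disjoint V1 & V2]), ([disjoint V1 & V3]) & ([disjoint V1 & V4])] /\
    [/\ ([disjoint V2 & V3]), ([disjoint V2 & V4]) & ([disjoint V3 & V4])] /\
    [/\ mono_in col V1 true, mono_in col V4 true, mono_between col V1 V3 true,
        mono_between col V1 V4 true & mono_between col V2 V4 true] /\
    [/\ mono_in col V2 false, mono_in col V3 false, mono_between col V1 V2 false,
        mono_between col V2 V3 false & mono_between col V3 V4 false].

(* Main.v *)
Require Import Defs.
From mathcomp Require Import all_boot.
From Stdlib Require Import Reals.
From Stdlib Require Import Lra ZArith.
Import ssrnat.
From mathcomp Require Import zify.
Open Scope nat_scope.
Set Implicit Arguments.
Unset Strict Implicit.
Unset Printing Implicit Defensive.

Lemma subset_of_card (T : finType) (X : {set T}) k :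
  k <= #|X| -> exists Y : {set T}, Y \subset X /\ #|Y| = k.
Proof.
elim: k => [|k IH] hk.
  by exists set0; rewrite sub0set cards0.
have [Y [hY cY]] := IH (ltnW hk).
have : Y \proper X by rewrite properEcard hY cY.
case/properP=> _ [x xX xY].
exists (x |: Y); split.
  by rewrite subUset sub1set xX hY.
by rewrite cardsU1 xY cY.
Qed.

Lemma card_sum (T : finType) (A B : {set T}) :
  #|A :&: B| = \sum_(u in B) (u \in A).
Proof.
rewrite -sum1_card big_mkcond /= [RHS]big_mkcond /=.
apply: eq_bigr => u _; rewrite !inE.
by case: (u \in A); case: (u \in B).
Qed.

Lemma pigeon (T U : finType) (S : {set T}) (I : {set U}) (g : T -> U) (y0 : U) :
  (forall x, x \in S -> g x \in I) ->
  exists y, #|S| <= #|I| * #|[set x in S | g x == y]|.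
Proof.
move=> hg.
have E : #|S| = \sum_(y in I) #|[set x in S | g x == y]|.
  rewrite -sum1_card (partition_big g (fun y => y \in I)) //=.
  apply: eq_bigr => y _; rewrite -sum1_card.
  by apply: eq_bigl => x; rewrite inE.
case: (set_0Vmem I) => [I0|[y1 y1I]].
  exists y0; rewrite E I0 big_set0 //.

have [y yI ymax] := @arg_maxnP _ y1 (fun y => y \in I) (fun y => #|[set x in S | g x == y]|) y1I.
exists y; rewrite E.
rewrite -sum_nat_const; apply: leq_sum => z zI.
exact: ymax.
Qed.

Lemma sum_split (T : finType) (S H : {set T}) (w : T -> nat) c M d :
  (forall x, x \in S -> x \in H -> w x <= M) ->
  (forall x, x \in S -> x \notin H -> c * w x <= d) ->
  c * \sum_(x in S) w x <= c * M * #|S :&: H| + d * #|S :\: H|.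
Proof.
move=> h1 h2.
rewrite (big_setID H) /= mulnDr.
apply: leq_add.
  rewrite -mulnA; apply: leq_mul => //.
  rewrite mulnC -sum_nat_const; apply: leq_sum => x; rewrite inE => /andP[xH xS].
  exact: h1.
rewrite big_distrr /= mulnC -sum_nat_const; apply: leq_sum => x.
rewrite inE => /andP[xH xS]; exact: h2.
Qed.

Lemma avg (T : finType) (w : T -> nat) M D :
  0 < D -> (forall x, w x <= M) -> M * #|T| <= D * \sum_x w x ->
  #|T| <= 2 * D * #|[set x | M <= 2 * D * w x]|.
Proof.
move=> D0 hM hs.
set H := [set x | M <= 2 * D * w x].
have := @sum_split T setT H w (2 * D) M M.
rewrite setTI setTD.
have -> : \sum_(x in [set: T]) w x = \sum_x w x by apply: eq_bigl => x; rewrite inE.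
move=> /(_ (fun x _ _ => hM x)).
have h2 : forall x, x \in [set: T] -> x \notin H -> 2 * D * w x <= M.
  by move=> x _; rewrite inE -ltnNge => /ltnW.
move=> /(_ h2) hb.
have hc : #|~: H| <= #|T| by apply: max_card.
case: (posnP M) => [M0|Mp].
  have -> : H = setT by apply/setP => x; rewrite !inE M0.
  rewrite cardsT; nia.
suff : M * #|T| <= M * (2 * D * #|H|) by rewrite leq_pmul2l.
nia.
Qed.

Lemma majority (T : finType) (G R : {set T}) :
  exists (A : {set T}) (c : bool), [/\ A \subset G, #|G| <= 2 * #|A| & forall a, a \in A -> (a \in R) = c].
Proof.
have := cardsID R G.
case: (leqP #|G :\: R| #|G :&: R|) => h E.
  exists (G :&: R), true; split.
  - exact: subsetIl.
  - lia.
  by move=> a; rewrite inE => /andP[].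
exists (G :\: R), false; split.
- exact: subsetDl.
- lia.
by move=> a; rewrite inE => /andP[] /negbTE.
Qed.

Lemma card_pred (T : finType) (A : {set T}) (P : pred T) :
  #|[set x in A | P x]| = \sum_(x in A) P x.
Proof.
rewrite -sum1_card big_mkcond /= [RHS]big_mkcond /=.
apply: eq_bigr => u _; rewrite !inE.
by case: (u \in A); case: (P u).
Qed.

Lemma card_prodI (T : finType) (A B : {set T}) :
  \sum_z ((z \in A) * (z \in B)) = #|A :&: B|.
Proof.
rewrite -sum1_card [RHS]big_mkcond /=.
apply: eq_bigr => u _; rewrite !inE.
by case: (u \in A); case: (u \in B).
Qed.

Lemma card_le_n n (A : {set 'I_n}) : #|A| <= n.
Proof. by rewrite -[X in _ <= X]card_ord max_card. Qed.

Lemma pow4 s : 4 ^ s = 2 ^ s * 2 ^ s.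
Proof. by rewrite -expnMn. Qed.

Lemma card_predT (T : finType) (P : pred T) : #|[set x | P x]| = \sum_x P x.
Proof.
rewrite -sum1_card big_mkcond /=.
by apply: eq_bigr => u _; rewrite inE; case: (P u).
Qed.

Section Comb.
Variable n : nat.
Variable col : 'I_n -> 'I_n -> bool.
Hypothesis hsym : colouring_sym col.

Definition N c (v : 'I_n) := [set u : 'I_n | (u != v) && (col v u == c)].
Definition deg v := #|N true v|.
Definition fab a b := #|N true a :&: N false b|.

Lemma N_sym c u v : (u \in N c v) = (v \in N c u).
Proof.
rewrite !inE eq_sym; case: eqVneq => //= h.
by rewrite hsym // eq_sym.
Qed.

Lemma inN_col c u v : u \in N c v -> col v u = c.
Proof. by rewrite inE => /andP[_ /eqP]. Qed.
Lemma inN_neq c u v : u \in N c v -> u != v.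
Proof. by rewrite inE => /andP[]. Qed.

Lemma deg_f a b : deg a + fab b a = deg b + fab a b.
Proof.
rewrite /deg /fab -(cardsID (N false b) (N true a)) -(cardsID (N false a) (N true b)).
set X := N true a :\: N false b.
set Y := N true b :\: N false a.
suff -> : #|X| = #|Y| by lia.
rewrite (cardsD1 b X) (cardsD1 a Y).
congr (_ + _).
  rewrite /X /Y !inE !eqxx /=.
  case: (eqVneq b a) => [->|h] //=.
  by rewrite (@hsym a b) // eq_sym.
apply: eq_card => u; rewrite !inE.
case: (eqVneq u b) => [eb|hb]; case: (eqVneq u a) => [ea|ha] //=; rewrite ?eb ?ea ?eqxx ?andbF //=;
  by case: (col a u); case: (col b u).
Qed.

Lemma sum_f a : \sum_b fab b a = \sum_(u in N false a) deg u.
Proof.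
rewrite /fab.
under eq_bigr => b _ do rewrite card_sum.
rewrite exchange_big /=.
apply: eq_bigr => u _.
rewrite /deg -(setIT (N true u)) card_sum.
rewrite [RHS](eq_bigl (fun i => true)); last by move=> i; rewrite inE.
by apply: eq_bigr => b _; rewrite N_sym.
Qed.


Lemma mono_in_sub (X Y : {set 'I_n}) c : X \subset Y -> mono_in col Y c -> mono_in col X c.
Proof. by move=> sXY h x y xX yX; apply: h; apply: (subsetP sXY). Qed.

Lemma mono_add (X : {set 'I_n}) v c : mono_in col X c -> (forall x, x \in X -> (x != v) && (col v x == c)) ->
  mono_in col (v |: X) c.
Proof.
move=> hX hv x y; rewrite !inE => /orP[/eqP->|xX] /orP[/eqP->|yX].
- by rewrite eqxx.
- by move=> _; have /andP[_ /eqP] := hv y yX.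
- move=> _; have /andP[xv /eqP <-] := hv x xX; exact: hsym.
exact: hX.
Qed.

Lemma mono_set0 c : mono_in col set0 c.
Proof. by move=> x y; rewrite inE. Qed.

Lemma ramsey_gen k : forall a b (S : {set 'I_n}), a + b = k -> 2 ^ (a + b) <= #|S| ->
  (exists X : {set 'I_n}, X \subset S /\ #|X| = a /\ mono_in col X true) \/
  (exists X : {set 'I_n}, X \subset S /\ #|X| = b /\ mono_in col X false).
Proof.
elim: k => [|k IH] [|a] [|b] S hk hS //.
- by left; exists set0; rewrite sub0set cards0; split=> //; split=> //; exact: mono_set0.
- by left; exists set0; rewrite sub0set cards0; split=> //; split=> //; exact: mono_set0.
- by right; exists set0; rewrite sub0set cards0; split=> //; split=> //; exact: mono_set0.
have : 0 < #|S| by apply: leq_trans hS; rewrite expn_gt0.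
case/card_gt0P => v vS.
set R := (S :\ v) :&: [set u | col v u].
set B := (S :\ v) :\: [set u | col v u].
have cRB : #|R| + #|B| = #|S| - 1 by rewrite cardsID (cardsD1 v S) vS; lia.
have RS : R \subset S by apply: subset_trans (subsetIl _ _) (subD1set _ _).
have BS : B \subset S by apply: subset_trans (subsetDl _ _) (subD1set _ _).
set P := 2 ^ (a + b.+1).
have eP : 2 ^ (a.+1 + b.+1) = 2 * P by rewrite /P addSn expnS.
have eP' : 2 ^ (a.+1 + b) = P by rewrite /P addSn addnS.
case: (leqP P #|R|) => hR.
  have [[X [XR [cX mX]]]|[X [XR [cX mX]]]] := IH a b.+1 R ltac:(lia) hR.
    left; exists (v |: X); split; last split.
    + by rewrite subUset sub1set vS (subset_trans XR RS).
    + have vX : v \notin X by apply/negP => /(subsetP XR); rewrite !inE eqxx.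
      by rewrite cardsU1 vX cX.
    apply: mono_add => // x /(subsetP XR); rewrite !inE => /andP[/andP[-> _] ->] //.
  by right; exists X; split; [exact: subset_trans XR RS|].
have hB : P <= #|B| by lia.
rewrite -eP' in hB.
have [[X [XR [cX mX]]]|[X [XR [cX mX]]]] := IH a.+1 b B ltac:(lia) hB.
  by left; exists X; split; [exact: subset_trans XR BS|].
right; exists (v |: X); split; last split.
+ by rewrite subUset sub1set vS (subset_trans XR BS).
+ have vX : v \notin X by apply/negP => /(subsetP XR); rewrite !inE eqxx /= andbF.
  by rewrite cardsU1 vX cX.
apply: mono_add => // x /(subsetP XR); rewrite !inE => /andP[/negbTE -> /andP[-> _]] //.
Qed.

Lemma ramsey s (S : {set 'I_n}) : 4 ^ s <= #|S| ->
  exists (X : {set 'I_n}) (c : bool), [/\ X \subset S, #|X| = s & mono_in col X c].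
Proof.
move=> hS.
have h : 2 ^ (s + s) <= #|S| by rewrite addnn -mul2n expnM.
have [[X [? [? ?]]]|[X [? [? ?]]]] := @ramsey_gen (s + s) s s S (erefl _) h.
  by exists X, true.
by exists X, false.
Qed.


Definition above a := [set b | deg a < deg b].

Lemma top_card c : 0 < c -> n <= c * #|[set a | c * #|above a| < n]|.
Proof.
move=> c0.
set T := [set a | _].
case: (set_0Vmem (~: T)) => [e|[a0 a0T]].
  have hT : #|T| = n by have := cardsC T; rewrite e cards0 addn0 card_ord.
  by rewrite hT leq_pmull.
have [am amT amax] := @arg_maxnP _ a0 (fun i => i \in ~: T) deg a0T.
have sub : above am \subset T.
  apply/subsetP => b; rewrite inE => hb.
  apply/negPn/negP => bT.
  have := amax b; rewrite inE => /(_ bT) /=.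
  by rewrite leqNgt hb.
move: amT; rewrite !inE -leqNgt => h.
apply: leq_trans h _.
by rewrite leq_mul2l (subset_leq_card sub) orbT.
Qed.

Lemma good_card K a : 0 < n -> (forall v c, n <= K * #|N c v|) ->
  2 * K ^ 2 * #|above a| < n ->
  n <= 4 * K ^ 2 * #|[set b | (n <= 4 * K ^ 2 * fab a b) && (n <= 4 * K ^ 2 * fab b a)]|.
Proof.
move=> n0 hbal ha.
set k2 := K ^ 2.
have hk2 : k2 = K * K by rewrite /k2 expnS expn1.
have s1 : n * n <= k2 * \sum_b fab b a.
  rewrite sum_f hk2 -mulnA big_distrr /=.
  have h1 : #|N false a| * n <= \sum_(u in N false a) K * deg u.
    rewrite -sum_nat_const; apply: leq_sum => u _; exact: hbal.
  have h2 : n <= K * #|N false a| := hbal a false.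
  apply: leq_trans (leq_mul h2 (leqnn n)) _.
  by rewrite -mulnA leq_mul2l h1 orbT.
set Big := [set b | n <= 4 * k2 * fab b a].
set S := ~: above a.
set G := [set b | (n <= 4 * k2 * fab a b) && (n <= 4 * k2 * fab b a)].
have sub : S :&: Big \subset G.
  apply/subsetP => b; rewrite !inE -leqNgt => /andP[hd hb].
  rewrite hb andbT; apply: leq_trans hb _.
  rewrite leq_mul2l; apply/orP; right.
  have := deg_f a b; lia.
have split : \sum_b fab b a = \sum_(b in above a) fab b a + \sum_(b in S) fab b a.
  rewrite (bigID (fun b => b \in above a)) /=.
  by congr (_ + _); apply: eq_bigl => b; rewrite ?inE.
have hS1 : \sum_(b in above a) fab b a <= #|above a| * n.
  rewrite -sum_nat_const; apply: leq_sum => b _; exact: card_le_n.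
have hS2 : 4 * k2 * \sum_(b in S) fab b a <= 4 * k2 * n * #|S :&: Big| + n * #|S :\: Big|.
  apply: sum_split => b _.
    by move=> _; exact: card_le_n.
  by rewrite inE -ltnNge => /ltnW.
have hS2' : 4 * k2 * \sum_(b in S) fab b a <= 4 * k2 * n * #|S :&: Big| + n * n.
  apply: leq_trans hS2 _.
  by rewrite leq_add2l leq_mul2l card_le_n orbT.
have hG := subset_leq_card sub.
rewrite -/k2 -/G.
move: s1 hS1 hS2' hG ha; rewrite split.
set A := #|above a|; set s1 := \sum_(b in above a) _; set s2 := \sum_(b in S) _.
set g := #|S :&: Big|; set gg := #|G|.
move=> s1' hS1 hS2' hG ha.
have e1 : 4 * k2 * s1 <= 2 * (2 * k2 * A) * n.
  have -> : 2 * (2 * k2 * A) * n = 4 * k2 * (A * n) by rewrite !mulnA.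
  by rewrite leq_mul2l hS1 orbT.
have e2 : 2 * (2 * k2 * A) * n <= 2 * (n - 1) * n.
  rewrite leq_mul2r leq_mul2l /=; apply/orP; right; lia.
case: (leqP n (4 * k2 * g)) => hg.
  by apply: leq_trans hg _; rewrite leq_mul2l hG orbT.
have e4 : n * (4 * k2 * g) <= n * (n - 1).
  rewrite leq_mul2l; apply/orP; right; lia.
have e5 : 4 * (n * n) <= 4 * k2 * s1 + 4 * k2 * s2.
  by have := leq_mul (leqnn 4) s1'; rewrite !mulnDr !mulnA.
have e3 : 4 * k2 * n * g = n * (4 * k2 * g).
  by rewrite mulnAC mulnC.
have e6 : (n - 1) * n + n = n * n.
  by rewrite -[X in _ + X]mul1n -mulnDl subnK.
move: e1 e2 e4 e5 e3 e6 hS2'.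
rewrite (mulnC n (n - 1)).
set X := n * n; set Y := (n - 1) * n; set Z := n * (4 * k2 * g).
move=> e1 e2 e4 e5 e3 e6 hS2'; rewrite e3 in hS2'.
lia.
Qed.

Lemma step2 (D s : nat) (A0 : {set 'I_n}) (good : 'I_n -> 'I_n -> bool) :
  0 < n -> 0 < D -> #|A0| = s -> (forall a, a \in A0 -> n <= D * #|[set b | good a b]|) ->
  exists (Bc G A2 : {set 'I_n}) (c : bool),
   [/\ n <= 2 * D * 4 ^ s * #|Bc|, s <= 2 * D * #|G|, G \subset A0 & A2 \subset G] /\
   [/\ #|G| <= 2 * #|A2|,
       (forall a b, a \in G -> b \in Bc -> good a b) &
       (forall a b, a \in A2 -> b \in Bc -> col a b = c)].
Proof.
move=> n0 D0 cA hA.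
pose w b := #|[set a in A0 | good a b]|.
have hw : forall b, w b <= s by move=> b; rewrite -cA; apply: subset_leq_card; apply/subsetP => x; rewrite inE => /andP[].
have hsum : s * #|'I_n| <= D * \sum_b w b.
  rewrite /w (eq_bigr (fun b => \sum_(a in A0) good a b)); last by move=> b _; rewrite card_pred.
  rewrite exchange_big /= big_distrr /= card_ord -cA -sum_nat_const.
  apply: leq_sum => a aA.
  by apply: leq_trans (hA a aA) _; rewrite card_predT.
have := avg D0 hw hsum.
set Pc := [set b | s <= 2 * D * w b] => hPc.
pose g b := ([set a in A0 | good a b], [set a in A0 | col a b]).
have hg : forall b, b \in Pc -> g b \in setX (powerset A0) (powerset A0).
  move=> b _; rewrite in_setX /= !powersetE.
  by apply/andP; split; apply/subsetP => x; rewrite inE => /andP[].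
have [y hy] := pigeon (set0, set0) hg.
move: hy; rewrite cardsX !card_powerset cA -pow4.
set Cl := [set b in Pc | g b == y] => hy.
have hn : n <= 2 * D * 4 ^ s * #|Cl|.
  rewrite card_ord in hPc; apply: leq_trans hPc _.
  by rewrite -[2 * D * 4 ^ s * _]mulnA leq_mul2l hy orbT.
have : 0 < #|Cl|.
  rewrite lt0n; apply/negP => /eqP h; move: hn; rewrite h muln0; lia.
case/card_gt0P => b0 b0C.
have [A2 [c [sA2 cA2 hc]]] := majority [set a in A0 | good a b0] [set a in A0 | col a b0].
have gb : forall b, b \in Cl -> g b = g b0.
  move=> b; rewrite !inE => /andP[_ /eqP ->].
  by move: b0C; rewrite !inE => /andP[_ /eqP ->].
exists Cl, [set a in A0 | good a b0], A2, c; split; split => //.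
- by move: b0C; rewrite !inE => /andP[].
- by apply/subsetP => x; rewrite inE => /andP[].
- move=> a b aG bC; have := gb b bC; case=> e _.
  by move: aG; rewrite -e inE => /andP[].
move=> a b aA2 bC; have := gb b bC; case=> _ e.
have := hc a aA2; rewrite -e inE.
have : a \in A0 by move: (subsetP sA2 a aA2); rewrite inE => /andP[].
by move=> -> /=.
Qed.

Lemma step3 (D s : nat) (X Y : {set 'I_n}) c1 c2 :
  0 < n -> 0 < D -> 0 < #|X| -> 0 < #|Y| -> #|X| <= s -> #|Y| <= s ->
  (forall x y, x \in X -> y \in Y -> n <= D * #|N c1 x :&: N c2 y|) ->
  exists (Z X' Y' : {set 'I_n}),
   [/\ n <= 2 * D * 4 ^ s * #|Z|, X' \subset X & Y' \subset Y] /\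
   [/\ #|X| <= 2 * D * #|X'|, #|Y| <= 2 * D * #|Y'| &
       forall z x y, z \in Z -> x \in X' -> y \in Y' -> (z \in N c1 x) && (z \in N c2 y)].
Proof.
move=> n0 D0 X0 Y0 Xs Ys hXY.
pose Ra z := [set x in X | z \in N c1 x].
pose Bb z := [set y in Y | z \in N c2 y].
pose w z := #|Ra z| * #|Bb z|.
have hw : forall z, w z <= #|X| * #|Y|.
  move=> z; apply: leq_mul; apply: subset_leq_card; apply/subsetP => x; rewrite inE => /andP[] //.
have hsum : #|X| * #|Y| * #|'I_n| <= D * \sum_z w z.
  have e : \sum_z w z = \sum_(x in X) \sum_(y in Y) #|N c1 x :&: N c2 y|.
    rewrite /w (eq_bigr (fun z => \sum_(x in X) \sum_(y in Y) ((z \in N c1 x) * (z \in N c2 y)))); last first.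
      move=> z _; rewrite /Ra /Bb !card_pred big_distrl /=; apply: eq_bigr => x _; by rewrite big_distrr.
    rewrite exchange_big /=; apply: eq_bigr => x _.
    rewrite exchange_big /=; apply: eq_bigr => y _.
    by rewrite -card_prodI.
  rewrite e big_distrr /= card_ord -sum_nat_const big_distrl /=.
  apply: leq_sum => x xX.
  rewrite big_distrr /= -sum_nat_const.
  by apply: leq_sum => y yY; apply: hXY.
have := avg D0 hw hsum.
set Pc := [set z | _ <= _] => hPc.
pose g z := (Ra z, Bb z).
have hg : forall z, z \in Pc -> g z \in setX (powerset X) (powerset Y).
  move=> z _; rewrite in_setX /= !powersetE.
  by apply/andP; split; apply/subsetP => x; rewrite inE => /andP[].
have [yy hy] := pigeon (set0, set0) hg.
move: hy; rewrite cardsX !card_powerset.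
set Cl := [set z in Pc | g z == yy] => hy.
have h4 : 2 ^ #|X| * 2 ^ #|Y| <= 4 ^ s.
  by rewrite pow4 leq_mul // leq_pexp2l.
have hn : n <= 2 * D * 4 ^ s * #|Cl|.
  rewrite card_ord in hPc; apply: leq_trans hPc _.
  rewrite -[2 * D * 4 ^ s * _]mulnA leq_mul2l; apply/orP; right.
  apply: leq_trans hy _; by rewrite leq_mul2r h4 orbT.
have : 0 < #|Cl|.
  rewrite lt0n; apply/negP => /eqP h; move: hn; rewrite h muln0; lia.
case/card_gt0P => z0 z0C.
have gz : forall z, z \in Cl -> g z = g z0.
  move=> z; rewrite !inE => /andP[_ /eqP ->].
  by move: z0C; rewrite !inE => /andP[_ /eqP ->].
have hz0 : #|X| * #|Y| <= 2 * D * (#|Ra z0| * #|Bb z0|).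
  by move: z0C; rewrite !inE => /andP[].
have r1 : #|Ra z0| <= #|X| by apply: subset_leq_card; apply/subsetP => x; rewrite inE => /andP[].
have r2 : #|Bb z0| <= #|Y| by apply: subset_leq_card; apply/subsetP => x; rewrite inE => /andP[].
exists Cl, (Ra z0), (Bb z0); split; split => //.
- by apply/subsetP => x; rewrite inE => /andP[].
- by apply/subsetP => x; rewrite inE => /andP[].
- case: (leqP #|X| (2 * D * #|Ra z0|)) => // h.
  have : 2 * D * (#|Ra z0| * #|Bb z0|) < #|X| * #|Y|.
    rewrite mulnA; apply: leq_ltn_trans (leq_mul (leqnn _) r2) _.
    by rewrite ltn_pmul2r.
  by rewrite ltnNge hz0.
- case: (leqP #|Y| (2 * D * #|Bb z0|)) => // h.
  have : 2 * D * (#|Ra z0| * #|Bb z0|) < #|X| * #|Y|.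
    rewrite mulnCA; apply: leq_ltn_trans (leq_mul r1 (leqnn _)) _.
    by rewrite ltn_pmul2l.
  by rewrite ltnNge hz0.
move=> z x y zC; have := gz z zC; case=> e1 e2.
rewrite -e1 -e2 !inE => /andP[_ ->] /andP[_ ->] //.
Qed.

Lemma step5 (s : nat) (P0 Q : {set 'I_n}) : #|P0| <= s ->
  exists (Q' P1 : {set 'I_n}) (c : bool),
   [/\ #|Q| <= 4 ^ s * #|Q'|, Q' \subset Q, P1 \subset P0, #|P0| <= 2 * #|P1| &
       forall p q, p \in P1 -> q \in Q' -> col p q = c].
Proof.
move=> Ps.
pose g q := [set p in P0 | col p q].
have hg : forall q, q \in Q -> g q \in powerset P0.
  move=> q _; rewrite powersetE; apply/subsetP => x; rewrite inE => /andP[] //.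
have [yy hy] := pigeon set0 hg.
move: hy; rewrite card_powerset.
set Cl := [set q in Q | g q == yy] => hy.
case: (posnP #|Cl|) => [C0|].
  exists set0, P0, true; split => //.
  - by move: hy; rewrite C0 cards0 !muln0.
  - exact: sub0set.
  - lia.
  by move=> p q _; rewrite inE.
case/card_gt0P => q0 q0C.
have [P1 [c [sP1 cP1 hc]]] := majority P0 (g q0).
exists Cl, P1, c; split => //.
- apply: leq_trans hy _; rewrite leq_mul2r; apply/orP; right.
  by rewrite pow4 -(mul1n (2 ^ #|P0|)) leq_mul ?expn_gt0 // leq_pexp2l.
- by apply/subsetP => x; rewrite inE => /andP[].
move=> p q pP qC.
have e : g q = g q0.
  move: qC q0C; rewrite !inE => /andP[_ /eqP ->] /andP[_ /eqP ->] //.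
have := hc p pP; rewrite -e inE.
by have -> : p \in P0 by apply: (subsetP sP1).
Qed.

Lemma mb_sub (X X' Y Y' : {set 'I_n}) c : X' \subset X -> Y' \subset Y ->
  mono_between col X Y c -> mono_between col X' Y' c.
Proof. by move=> sX sY h x y xX yY; apply: h; [apply: (subsetP sX)|apply: (subsetP sY)]. Qed.

Lemma mb_sym (X Y : {set 'I_n}) c : [disjoint X & Y] ->
  mono_between col X Y c -> mono_between col Y X c.
Proof.
move=> d h y x yY xX.
have xy : x != y by apply/eqP => e; move: (disjointFr d xX); rewrite e yY.
by rewrite -(h x y xX yY) hsym // eq_sym.
Qed.

Lemma out_i t (X Y : {set 'I_n}) c : t <= #|X| -> t <= #|Y| -> [disjoint X & Y] ->
  mono_in col X c -> mono_in col Y c -> mono_between col X Y (~~ c) -> outcome_i t col.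
Proof.
move=> sX sY d hX hY hXY.
have [X' [sX' cX']] := subset_of_card sX.
have [Y' [sY' cY']] := subset_of_card sY.
exists X', Y', c; split; first split => //.
  exact: disjointWl sX' (disjointWr sY' d).
split.
- exact: mono_in_sub sX' hX.
- exact: mono_in_sub sY' hY.
exact: mb_sub sX' sY' hXY.
Qed.

Lemma out_ii t (V1 V2 V3 V4 : {set 'I_n}) :
  t <= #|V1| -> t <= #|V2| -> t <= #|V3| -> t <= #|V4| ->
  [disjoint V1 & V2] -> [disjoint V1 & V3] -> [disjoint V1 & V4] ->
  [disjoint V2 & V3] -> [disjoint V2 & V4] -> [disjoint V3 & V4] ->
  mono_in col V1 true -> mono_in col V4 true -> mono_between col V1 V3 true ->
  mono_between col V1 V4 true -> mono_between col V2 V4 true ->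
  mono_in col V2 false -> mono_in col V3 false -> mono_between col V1 V2 false ->
  mono_between col V2 V3 false -> mono_between col V3 V4 false -> outcome_ii t col.
Proof.
move=> s1 s2 s3 s4 d12 d13 d14 d23 d24 d34 m1 m4 b13 b14 b24 m2 m3 b12 b23 b34.
have [W1 [w1 c1]] := subset_of_card s1.
have [W2 [w2 c2]] := subset_of_card s2.
have [W3 [w3 c3]] := subset_of_card s3.
have [W4 [w4 c4]] := subset_of_card s4.
exists W1, W2, W3, W4.
split; first by [].
split; first split; try (apply: disjointWl; [eassumption|]; apply: disjointWr; [eassumption|]; assumption).
split; first split; try (apply: disjointWl; [eassumption|]; apply: disjointWr; [eassumption|]; assumption).
split; split; try (apply: mono_in_sub; eassumption); try (apply: mb_sub; eassumption).
Qed.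

Ltac try_pair :=
  match goal with
  | hX : mono_in col ?X ?c, hY : mono_in col ?Y ?c, hXY : mono_between col ?X ?Y _ |- _ =>
    left; apply: (@out_i _ X Y c); [assumption|assumption|assumption|exact hX|exact hY|exact hXY]
  end.

Lemma blob t (A B P Q : {set 'I_n}) cA cB cP cQ cAB cPQ :
  t <= #|A| -> t <= #|B| -> t <= #|P| -> t <= #|Q| ->
  mono_in col A cA -> mono_in col B cB -> mono_in col P cP -> mono_in col Q cQ ->
  mono_between col A P true -> mono_between col A Q false ->
  mono_between col B P false -> mono_between col B Q true ->
  mono_between col A B cAB -> mono_between col P Q cPQ ->
  [disjoint A & B] -> [disjoint A & P] -> [disjoint A & Q] ->
  [disjoint B & P] -> [disjoint B & Q] -> [disjoint P & Q] ->
  outcome_i t col \/ outcome_ii t col.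
Proof.
move=> sA sB sP sQ hA hB hP hQ hAP hAQ hBP hBQ hAB hPQ dAB dAP dAQ dBP dBQ dPQ.
move: hA hB hP hQ hAB hPQ.
case: cA; case: cB; case: cP; case: cQ; case: cAB; case: cPQ => hA hB hP hQ hAB hPQ;
  try solve [try_pair].
- right; apply: (out_ii sA sQ sP sB) => //; first [by rewrite disjoint_sym | by apply: mb_sym].
right; apply: (out_ii sP sB sA sQ) => //; first [by rewrite disjoint_sym | by apply: mb_sym].
Qed.

Lemma disj_of (X Y : {set 'I_n}) : (forall x y, x \in X -> y \in Y -> x != y) -> [disjoint X & Y].
Proof.
move=> h; rewrite -setI_eq0; apply/eqP/setP => x; rewrite !inE.
apply/negbTE/negP => /andP[xX xY]; have := h x x xX xY; by rewrite eqxx.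
Qed.

Lemma arith6 K x : 2 * (4 * K ^ 2) * (2 * (2 * (4 * K ^ 2) * (2 * (4 * K ^ 2) * x))) = 1024 * K ^ 6 * x.
Proof.
have -> : K ^ 6 = K ^ 2 * K ^ 2 * K ^ 2 by rewrite -!expnD.
set k := K ^ 2; lia.
Qed.

Lemma arithB K x : 0 < K -> 64 * K ^ 2 * K ^ 2 * x <= 1024 * K ^ 6 * x.
Proof.
move=> K0.
have -> : K ^ 6 = K ^ 2 * K ^ 2 * K ^ 2 by rewrite -!expnD.
have : 0 < K ^ 2 by rewrite expn_gt0 K0.
set k := K ^ 2 => k0.
have h : k * k * x <= (k * k * x) * k by rewrite leq_pmulr.
lia.
Qed.

Lemma arith4 K x : 2 * (4 * K ^ 2) * (2 * (4 * K ^ 2) * x) = 64 * K ^ 2 * K ^ 2 * x.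
Proof. set k := K ^ 2; lia. Qed.

Theorem main_nat (K t : nat) : 0 < K -> 0 < t ->
  2 ^ (7 * (1024 * K ^ 6 * t)) <= n ->
  (forall v c, n <= K * cdeg col c v) -> outcome_i t col \/ outcome_ii t col.
Proof.
move=> K0 t0 hn hbal.
set s := 1024 * K ^ 6 * t.
set D := 4 * K ^ 2.
have K2 : 0 < K ^ 2 by rewrite expn_gt0 K0.
have D0 : 0 < D by rewrite /D muln_gt0.
have K6 : 0 < K ^ 6 by rewrite expn_gt0 K0.
have s0 : 0 < s by rewrite /s !muln_gt0 K0 t0.
have s_ge : 8 * K ^ 2 <= s.
  have : K ^ 2 <= K ^ 6 by rewrite leq_pexp2l.
  rewrite /s; move: t0; set k6 := K ^ 6; set k2 := K ^ 2; nia.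
have h2s : 8 * K ^ 2 <= 2 ^ s by apply: leq_trans s_ge (ltnW (@ltn_expl 2 s isT)).
have e64 : (2 ^ 6) ^ s = 4 ^ s * 4 ^ s * 4 ^ s by rewrite -!expnMn.
have hbig : 2 * D * (4 ^ s * 4 ^ s * 4 ^ s) <= n.
  apply: leq_trans hn.
  have -> : 7 * s = s + 6 * s by lia.
  rewrite expnD expnM e64; apply: leq_mul => //.
  by rewrite /D mulnA.
have n0 : 0 < n by apply: leq_trans hn; rewrite expn_gt0.
have p4 : 0 < 4 ^ s by rewrite expn_gt0.
have bound1 : forall X : {set 'I_n}, n <= 2 * D * 4 ^ s * #|X| -> 4 ^ s <= #|X|.
  move=> X hX.
  have q : 0 < 2 * D * 4 ^ s by rewrite muln_gt0 p4 andbT muln_gt0 D0.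
  rewrite -(leq_pmul2l q).
  apply: leq_trans _ hX; apply: leq_trans _ hbig.
  rewrite -mulnA leq_mul2l; apply/orP; right.
  by rewrite leq_pmulr.
set T := [set a | 2 * K ^ 2 * #|above a| < n].
have hT : n <= 2 * K ^ 2 * #|T| by apply: top_card; rewrite muln_gt0 K2.
have T4 : 4 ^ s <= #|T|.
  apply: bound1; apply: leq_trans hT _.
  rewrite leq_mul2r; apply/orP; right.
  apply: (@leq_trans (2 * D)); first by rewrite /D leq_mul2l /= leq_pmull.
  by rewrite leq_pmulr.
have [A0 [cA [sA0 cA0 mA0]]] := ramsey T4.
pose good a b := (n <= D * fab a b) && (n <= D * fab b a).
have hgood : forall a, a \in A0 -> n <= D * #|[set b | good a b]|.
  move=> a aA; have := subsetP sA0 a aA; rewrite inE => ha.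
  exact: (good_card n0 hbal ha).
have [Bc [G [A2 [cAB [[hBc sG GA0 A2G] [GA2 hgoodG hcAB]]]]]] := step2 n0 D0 cA0 hgood.
have [B0 [cB [sB0 cB0 mB0]]] := ramsey (bound1 _ hBc).
have A2pos : 0 < #|A2|.
  rewrite lt0n; apply/negP => /eqP h; move: sG GA2; rewrite h muln0 => sG' ; rewrite leqn0 => /eqP h'.
  by move: sG'; rewrite h' muln0 leqn0 => /eqP h''; move: s0; rewrite h''.
have A2s : #|A2| <= s by rewrite -cA0; apply: subset_leq_card; apply: subset_trans A2G GA0.
have B0pos : 0 < #|B0| by rewrite cB0.
have h3 : forall a b, a \in A2 -> b \in B0 -> n <= D * #|N true a :&: N false b|.
  move=> a b aA bB; have := hgoodG a b (subsetP A2G a aA) (subsetP sB0 b bB).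
  by case/andP.
have [Pc [A3 [B1 [[hPc sA3 sB1] [cA3 cB1 hP]]]]] := step3 n0 D0 A2pos B0pos A2s (eq_leq cB0) h3.
have B1pos : 0 < #|B1|.
  rewrite lt0n; apply/negP => /eqP h; move: cB1; rewrite h muln0 cB0 leqn0 => /eqP h'.
  by move: s0; rewrite h'.
have A3pos : 0 < #|A3|.
  rewrite lt0n; apply/negP => /eqP h; move: cA3; rewrite h muln0 leqn0 => /eqP h'.
  by move: A2pos; rewrite h'.
have B1s : #|B1| <= s by rewrite -cB0; apply: subset_leq_card.
have A3s : #|A3| <= s by apply: leq_trans A2s; apply: subset_leq_card.
have h4 : forall b a, b \in B1 -> a \in A3 -> n <= D * #|N true b :&: N false a|.
  move=> b a bB aA.
  have := hgoodG a b (subsetP A2G a (subsetP sA3 a aA)) (subsetP sB0 b (subsetP sB1 b bB)).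
  by case/andP.
have [Qc [B2 [A4 [[hQc sB2 sA4] [cB2 cA4 hQ]]]]] := step3 n0 D0 B1pos A3pos B1s A3s h4.
have [P0 [cP [sP0 cP0 mP0]]] := ramsey (bound1 _ hPc).
have [Q' [P1 [cPQ [hQ' sQ' sP1 cP1 hcPQ]]]] := step5 Qc (eq_leq cP0).
have Q4 : 4 ^ s <= #|Q'|.
  have q : 0 < 2 * D * 4 ^ s * 4 ^ s by rewrite muln_gt0 p4 andbT muln_gt0 p4 andbT muln_gt0 D0.
  rewrite -(leq_pmul2l q).
  apply: (@leq_trans n); first by apply: leq_trans _ hbig; rewrite !mulnA.
  apply: leq_trans hQc _.
  by rewrite -[2 * D * 4 ^ s * 4 ^ s * #|Q'|]mulnA leq_mul2l hQ' orbT.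
have [Q0 [cQ [sQ0 cQ0 mQ0]]] := ramsey Q4.
have sizeA : t <= #|A4|.
  have e1 : 2 * D * #|G| <= 2 * D * (2 * #|A2|) by rewrite leq_mul2l GA2 orbT.
  have e2 : 2 * #|A2| <= 2 * (2 * D * #|A3|) by rewrite leq_mul2l cA3 orbT.
  have e3 : 2 * D * #|A3| <= 2 * D * (2 * D * #|A4|) by rewrite leq_mul2l cA4 orbT.
  have c1 : s <= 2 * D * (2 * (2 * D * (2 * D * #|A4|))).
    apply: leq_trans sG _; apply: leq_trans e1 _; rewrite leq_mul2l; apply/orP; right.
    apply: leq_trans e2 _; by rewrite leq_mul2l e3 orbT.
  by move: c1; rewrite /D arith6 /s leq_pmul2l // muln_gt0 K6.
have sizeB : t <= #|B2|.
  have e1 : 2 * D * #|B1| <= 2 * D * (2 * D * #|B2|) by rewrite leq_mul2l cB2 orbT.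
  have c1 : s <= 2 * D * (2 * D * #|B2|).
    by apply: leq_trans e1; rewrite -cB0.
  move: c1; rewrite /D arith4 /s => c1.
  have := leq_trans c1 (arithB _ K0).
  by rewrite leq_pmul2l // muln_gt0 K6.
have sizeP : t <= #|P1|.
  have : 2 * t <= 2 * #|P1|.
    apply: leq_trans _ cP1; rewrite cP0 /s leq_mul2r; apply/orP; right.
    by apply: (@leq_trans 1024) => //; apply: leq_pmulr.
  by rewrite leq_mul2l.
have sizeQ : t <= #|Q0| by rewrite cQ0 /s leq_pmull // muln_gt0 K6.
have t1 : 0 < #|A4| by apply: leq_trans sizeA.
have t2 : 0 < #|B2| by apply: leq_trans sizeB.
have t3 : 0 < #|P1| by apply: leq_trans sizeP.
have t4 : 0 < #|Q0| by apply: leq_trans sizeQ.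
have hAP : forall a p, a \in A4 -> p \in P1 -> p \in N true a.
  move=> a p aA pP; case/card_gt0P: B1pos => b bB.
  have := hP p a b (subsetP sP0 p (subsetP sP1 p pP)) (subsetP sA4 a aA) bB.
  by case/andP.
have hBP : forall b p, b \in B2 -> p \in P1 -> p \in N false b.
  move=> b p bB pP; case/card_gt0P: A3pos => a aA.
  have := hP p a b (subsetP sP0 p (subsetP sP1 p pP)) aA (subsetP sB2 b bB).
  by case/andP.
have hBQ : forall b q, b \in B2 -> q \in Q0 -> q \in N true b.
  move=> b q bB qQ; case/card_gt0P: t1 => a aA.
  have := hQ q b a (subsetP sQ' q (subsetP sQ0 q qQ)) bB aA.
  by case/andP.
have hAQ : forall a q, a \in A4 -> q \in Q0 -> q \in N false a.
  move=> a q aA qQ; case/card_gt0P: t2 => b bB.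
  have := hQ q b a (subsetP sQ' q (subsetP sQ0 q qQ)) bB aA.
  by case/andP.
have sA4' : A4 \subset A0.
  by apply: subset_trans sA4 (subset_trans sA3 (subset_trans A2G GA0)).
have sB2' : B2 \subset B0 by apply: subset_trans sB2 sB1.
apply: (@blob t A4 B2 P1 Q0 cA cB cP cQ cAB cPQ) => //.
- exact: mono_in_sub sA4' mA0.
- exact: mono_in_sub sB2' mB0.
- exact: mono_in_sub sP1 mP0.
- by move=> a p aA pP; apply: inN_col; apply: hAP.
- by move=> a q aA qQ; apply: inN_col; apply: hAQ.
- by move=> b p bB pP; apply: inN_col; apply: hBP.
- by move=> b q bB qQ; apply: inN_col; apply: hBQ.
- move=> a b aA bB; apply: hcAB.
    by apply: (subsetP sA3); apply: (subsetP sA4).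
  by apply: (subsetP sB0); apply: (subsetP sB2').
- by move=> p q pP qQ; apply: hcPQ => //; apply: (subsetP sQ0).
- apply: disj_of => a b aA bB; case/card_gt0P: t3 => p pP.
  apply/eqP => e; move: (inN_col (hAP a p aA pP)) (inN_col (hBP b p bB pP)); rewrite e => ->.
  by [].
- by apply: disj_of => a p aA pP; rewrite eq_sym; apply: inN_neq (hAP a p aA pP).
- by apply: disj_of => a q aA qQ; rewrite eq_sym; apply: inN_neq (hAQ a q aA qQ).
- by apply: disj_of => b p bB pP; rewrite eq_sym; apply: inN_neq (hBP b p bB pP).
- by apply: disj_of => b q bB qQ; rewrite eq_sym; apply: inN_neq (hBQ b q bB qQ).
apply: disj_of => p q pP qQ; case/card_gt0P: t1 => a aA.
apply/eqP => e; move: (inN_col (hAP a p aA pP)) (inN_col (hAQ a q aA qQ)); rewrite e => ->.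
by [].
Qed.

End Comb.

Lemma INR_expn a m : INR (a ^ m)%N = (INR a ^ m)%R.
Proof.
elim: m => [|m IH]; first by rewrite expn0.
by rewrite expnS mult_INR IH /=.
Qed.

Theorem theorem1p4 :
  exists C : R, (0 < C)%R /\
    forall (eps : R) (t n : nat),
      (0 < eps)%R -> (1 <= t)%N ->
      (Rpower 2 (C * INR t / eps ^ 16) <= INR n)%R ->
      forall col : 'I_n -> 'I_n -> bool,
        colouring_sym col ->
        locally_balanced col eps ->
        outcome_i t col \/ outcome_ii t col.
Proof.
exists 458752%R; split; first lra.
move=> eps t n eps0 t1 hn col hsym hbal.
have Rp : (0 < Rpower 2 (458752 * INR t / eps ^ 16))%R by apply: exp_pos.
have n0 : (0 < n)%N.
  case: n col hsym hbal hn => [|m] // col hsym hbal hn.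
  by move: hn; rewrite (_ : INR 0 = 0%R) // => hn; lra.
pose v0 : 'I_n := Ordinal n0.
have [h1 _] := hbal v0.
have dlt : (cdeg col true v0 < n)%N.
  rewrite /cdeg -[X in (_ < X)%N]card_ord; apply: proper_card.
  apply/properP; split; first exact: subset_predT.
  by exists v0 => //; rewrite inE eqxx.
have eps1 : (eps < 1)%R.
  have : (INR (cdeg col true v0) < INR n)%R by apply: lt_INR; apply/ltP.
  have : (0 < INR n)%R by apply: lt_0_INR; apply/ltP.
  nra.
set x := (/ eps)%R.
have x1 : (1 < x)%R.
  rewrite /x -Rinv_1; apply: Rinv_lt_contravar; lra.
have ex : (eps * x = 1)%R by rewrite /x; field; lra.
have [hup1 hup2] := archimed x.
have upos : (0 <= up x)%Z.
  apply: Z.lt_le_incl; apply: lt_IZR; lra.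
set K := Z.to_nat (up x).
have INRK : INR K = IZR (up x) by rewrite INR_IZR_INZ Z2Nat.id.
have K0 : (0 < K)%N.
  apply/ltP; apply: INR_lt; rewrite INRK /=; lra.
have Kx : (INR K <= 2 * x)%R by rewrite INRK; lra.
have hbalN : forall v c, (n <= K * cdeg col c v)%N.
  move=> v c; apply/leP; apply: INR_le; rewrite mult_INR.
  have hd : (eps * INR n <= INR (cdeg col c v))%R by case: c; case: (hbal v).
  have := pos_INR n; have := pos_INR (cdeg col c v).
  rewrite INRK in Kx *; nra.
have hsize : (2 ^ (7 * (1024 * K ^ 6 * t)) <= n)%N.
  have I2 : INR 2 = 2%R by rewrite /=; lra.
  apply/leP; apply: INR_le; rewrite INR_expn I2 -Rpower_pow; [|lra].
  apply: Rle_trans hn; apply: Rle_Rpower; first lra.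
  have eI : INR (7 * (1024 * K ^ 6 * t)) = (7 * (1024 * INR K ^ 6 * INR t))%R.
    rewrite !mult_INR (INR_IZR_INZ 7) (INR_IZR_INZ 1024) /=; ring.
  rewrite eI.
  have e16 : (/ eps ^ 16 = x ^ 16)%R by rewrite /x pow_inv.
  rewrite /Rdiv e16.
  have k6 : (INR K ^ 6 <= 64 * x ^ 16)%R.
    have a1 : (INR K ^ 6 <= (2 * x) ^ 6)%R by apply: pow_incr; split; [apply: pos_INR|].
    have a2 : (x ^ 6 <= x ^ 16)%R by apply: Rle_pow; [lra|lia].
    have a3 : ((2 * x) ^ 6 = 64 * x ^ 6)%R by rewrite Rpow_mult_distr; lra.
    lra.
  have tp := pos_INR t.
  nra.
exact: (main_nat hsym K0 t1 hsize hbalN).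
Qed.
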